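(* For $n \ge 3$, $\dim_{1,f}(C_n)=\frac{n}{2}$ if $n \in \{3,4\}$, and $\dim_{1,f}(C_n)=\frac{n}{4}$ if $n \ge 5$.
   Context: $C_n$ is the cycle on $n$ vertices. $d(x,y)$ is the distance in $G$. $d_1(x,y)=\min\{d(x,y),2\}$ and $R_1\{x,y\}=\{z\in V(G): d_1(x,z)\neq d_1(y,z)\}$. For a function $g$ on $V(G)$ and $U\subseteq V(G)$, $g(U)=\sum_{s\in U}g(s)$. A function $h:V(G)\to[0,1]$ is a $1$-truncated resolving function of $G$ if $h(R_1\{x,y\})\ge 1$ for all distinct $x,y\in V(G)$; $\dim_{1,f}(G)$ is the minimum of $h(V(G))$ over all such $h$. *)

(* Defs.v *)
From mathcomp Require Import all_boot all_order all_algebra.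
Set Implicit Arguments. Unset Strict Implicit. Unset Printing Implicit Defensive.
Import Order.TTheory GRing.Theory Num.Theory.
Local Open Scope ring_scope.

(* The cycle C_n on vertex set 'I_n (i adjacent to i+1 mod n).
   Its graph distance: d(x,y) = min(|x-y|, n-|x-y|). *)
Definition cycle_dist (n : nat) (x y : 'I_n) : nat :=
  let k := (maxn x y - minn x y)%N in minn k (n - k)%N.

Definition cycle_dist1 (n : nat) (x y : 'I_n) : nat := minn (cycle_dist x y) 2.

Definition R1 (n : nat) (x y : 'I_n) : {set 'I_n} :=
  [set z | cycle_dist1 x z != cycle_dist1 y z].

Definition fsum (R : numDomainType) (n : nat) (g : 'I_n -> R) (U : {set 'I_n}) : R :=
  \sum_(s in U) g s.

Definition trunc1_resolving (R : numDomainType) (n : nat) (h : 'I_n -> R) : Prop :=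
  (forall v, 0 <= h v <= 1) /\
  (forall x y : 'I_n, x != y -> 1 <= fsum h (R1 x y)).

Definition is_dim1f (R : numDomainType) (n : nat) (v : R) : Prop :=
  (exists h : 'I_n -> R, trunc1_resolving h /\ fsum h [set: 'I_n] = v) /\
  (forall h : 'I_n -> R, trunc1_resolving h -> v <= fsum h [set: 'I_n]).

(* Main.v *)
Require Import Defs.
From mathcomp Require Import all_boot all_order all_algebra.
From mathcomp Require Import zify ring lra.
Import Order.TTheory GRing.Theory Num.Theory.

Lemma valS n (x : 'I_n) : nat_of_ord (ordS x) = if x.+1 == n then 0%N else x.+1.
Proof.
rewrite /=; case: eqP => [->|h]; first by rewrite modnn.
rewrite modn_small //; have := ltn_ord x; lia.
Qed.

Lemma valP n (x : 'I_n) : nat_of_ord (ord_pred x) = if nat_of_ord x == 0%N then n.-1 else (nat_of_ord x).-1.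
Proof.
rewrite /=; have := ltn_ord x; case: eqP => [->|h] hx.
  by rewrite add0n modn_small //; lia.
have -> : (x + n).-1 = (x.-1 + n)%N by lia.
rewrite modnDr modn_small //; lia.
Qed.

Lemma valS' n (x : 'I_n) : val (ordS x) = if x.+1 == n then 0%N else x.+1.
Proof. exact: valS. Qed.
Lemma valP' n (x : 'I_n) : val (ord_pred x) = if nat_of_ord x == 0%N then n.-1 else (nat_of_ord x).-1.
Proof. exact: valP. Qed.
Lemma valE n (x : 'I_n) : val x = nat_of_ord x. Proof. by []. Qed.

Lemma inR1 n (x y z : 'I_n) : (z \in R1 x y) =
  (minn (minn (maxn x z - minn x z) (n - (maxn x z - minn x z))) 2 !=
   minn (minn (maxn y z - minn y z) (n - (maxn y z - minn y z))) 2).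
Proof. by rewrite inE. Qed.

Lemma R1_lb5 n (x z : 'I_n) : (5 <= n)%N -> z \in R1 x (ordS x) ->
  z \in [:: ord_pred x; x; ordS x; ordS (ordS x)].
Proof.
move=> n5; rewrite inR1 !inE -!val_eqE ?valS' ?valP' ?valE ?valS ?valP ?valS.
have := ltn_ord x; have := ltn_ord z.
case: ifP => /eqP h1; case: ifP => /eqP h2; try case: ifP => /eqP h3; lia.
Qed.
Ltac splitifs := repeat match goal with
 | |- context [if ?u == ?v then _ else _] =>
    lazymatch u with context [if _ then _ else _] => fail | _ => idtac end;
    case: (@eqP _ u v) => ?; cbv iota beta
 end.
Ltac crunch x y := rewrite ?inR1 ?inE -?val_eqE ?valS' ?valP' ?valE ?valS ?valP ?valS ?valP;
  have := ltn_ord x; have := ltn_ord y; splitifs; lia.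

Lemma Pm n (x y : 'I_n) : (5 <= n)%N -> x != y -> x != ordS y -> ordS y != ord_pred x -> ord_pred x \in R1 x y.
Proof. move=> h5; crunch x y. Qed.
Lemma Sm n (x y : 'I_n) : (5 <= n)%N -> x != y -> x != ordS y -> ordS y != ord_pred x -> ordS y \in R1 x y.
Proof. move=> h5; crunch x y. Qed.
Lemma Qsw n (x y : 'I_n) : (5 <= n)%N -> x != y -> (x == ordS y) || (ordS y == ord_pred x) -> 
  (y != ordS x) && (ordS x != ord_pred y).
Proof. move=> h5; crunch x y. Qed.
Lemma U1 n (x : 'I_n) : (2 <= n)%N -> x != ord_pred x.
Proof. move=> h5; crunch x x. Qed.
Lemma U2 n (x : 'I_n) : (2 <= n)%N -> x != ordS x.
Proof. move=> h5; crunch x x. Qed.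
Lemma U3 n (x y : 'I_n) : (y != ord_pred x) = (x != ordS y).
Proof. crunch x y. Qed.

Lemma R1_lb3 n (x z : 'I_n) : n = 3%N -> z \in R1 x (ordS x) -> z \in [:: x; ordS x].
Proof. move=> hn; subst n; crunch x z. Qed.
Lemma R1_lb4 n (x z : 'I_n) : n = 4%N -> z \in R1 x (ordS (ordS x)) -> z \in [:: x; ordS (ordS x)].
Proof. move=> hn; subst n; crunch x z. Qed.
Lemma R1_x n (x y : 'I_n) : x != y -> x \in R1 x y.
Proof. crunch x y. Qed.
Lemma R1_y n (x y : 'I_n) : x != y -> y \in R1 x y.
Proof. crunch x y. Qed.
Lemma R1_xy n (x y : 'I_n) : x != y -> (x \in R1 x y) && (y \in R1 x y).
Proof. by move=> xy; rewrite R1_x ?R1_y. Qed.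
Lemma U4 n (x : 'I_n) : n = 4%N -> x != ordS (ordS x).
Proof. move=> hn; subst n; crunch x x. Qed.
Lemma uniqQ n (x y : 'I_n) : (5 <= n)%N -> x != y -> x != ordS y -> ordS y != ord_pred x ->
  uniq [:: x; y; ord_pred x; ordS y].
Proof.
move=> h5 h1 h2 h3; have h2n : (2 <= n)%N by lia.
rewrite /= !inE !negb_or h1 h2 U1 // U3 h2 U2 // (eq_sym (ord_pred x)) h3.
by [].
Qed.
Lemma R1C n (x y : 'I_n) : R1 x y = R1 y x.
Proof. by apply/setP => z; rewrite !inE eq_sym. Qed.


Local Open Scope ring_scope.

Lemma sum_sub (R : numDomainType) (T : finType) (h : T -> R) (hpos : forall v, 0 <= h v)
  (s : seq T) (P : pred T) : {subset P <= s} -> \sum_(z | P z) h z <= \sum_(z <- s) h z.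
Proof.
elim: s P => [|a s IH] P sub.
  rewrite big_nil big_pred0 // => z; apply/negP => /sub; by rewrite in_nil.
rewrite big_cons; case Pa: (P a).
  rewrite (bigD1 a) //=; apply: lerD => //; apply: IH => z /andP [Pz za].
  by have := sub z Pz; rewrite inE (negbTE za).
apply: le_trans (IH P _) _; last by rewrite lerDr.
move=> z Pz; have := sub z Pz; rewrite inE => /orP [/eqP za|] //; by move: Pz; rewrite za unfold_in /= Pa.
Qed.

Lemma sum_fs (R : numDomainType) n (h : 'I_n -> R) (fs : seq ('I_n -> 'I_n)) :
  (forall f, List.In f fs -> injective f) ->
  \sum_(f <- fs) \sum_x h (f x) = (size fs)%:R * \sum_x h x.
Proof.
elim: fs => [|f fs IH] inj; first by rewrite big_nil mul0r.
rewrite big_cons IH; last by move=> g g_in; apply: inj; right.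
rewrite /= -addn1 natrD mulrDl mul1r addrC; congr (_ + _).
by rewrite [RHS](reindex_inj (inj f (or_introl erefl))).
Qed.

Lemma lower (R : numDomainType) n (h : 'I_n -> R) (hpos : forall v, 0 <= h v)
  (p : 'I_n -> 'I_n) (fs : seq ('I_n -> 'I_n)) :
  (forall x, 1 <= fsum h (R1 x (p x))) ->
  (forall f, List.In f fs -> injective f) ->
  (forall x, {subset R1 x (p x) <= [seq f x | f <- fs]}) ->
  n%:R <= (size fs)%:R * fsum h [set: 'I_n].
Proof.
move=> h1 inj sub.
have -> : fsum h [set: 'I_n] = \sum_x h x by apply: eq_bigl => z; rewrite in_setT.
rewrite -sum_fs // exchange_big /=.
have -> : n%:R = \sum_(x : 'I_n) (1 : R) by rewrite sumr_const card_ord.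
apply: ler_sum => x _; apply: le_trans (h1 x) _.
rewrite -(big_map (fun f => f x) predT h).
rewrite /fsum; apply: sum_sub => // z; exact: sub.
Qed.

Lemma card_lb n (A : {set 'I_n}) (s : seq 'I_n) : uniq s -> all (fun z => z \in A) s ->
  (size s <= #|A|)%N.
Proof.
move=> us al; rewrite -(card_uniqP us); apply: subset_leq_card.
by apply/subsetP => z zs; move/allP: al; apply.
Qed.

Lemma upper (R : numFieldType) n (c : R) (k : nat) : 0 <= c <= 1 -> 1 <= c *+ k ->
  (forall x y : 'I_n, x != y -> (k <= #|R1 x y|)%N) ->
  trunc1_resolving (fun _ : 'I_n => c) /\ fsum (fun _ => c) [set: 'I_n] = c * n%:R.
Proof.
move=> c01 ck hk; split; last by rewrite /fsum sumr_const cardsT card_ord mulr_natr.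
split => // x y xy; rewrite /fsum sumr_const; apply: le_trans ck _.
case/andP: c01 => c0 _; have hk' := hk x y xy.
rewrite -(mulr_natr c k) -(mulr_natr c #|R1 x y|); apply: ler_wpM2l => //.
by rewrite ler_nat.
Qed.

Lemma card4 n (x y : 'I_n) : (5 <= n)%N -> x != y -> (4 <= #|R1 x y|)%N.
Proof.
move=> h5 xy; case: (boolP ((x == ordS y) || (ordS y == ord_pred x))) => hc.
  move/andP: (Qsw _ _ _ h5 xy hc) => [c1 c2].
  have yx : y != x by rewrite eq_sym.
  rewrite R1C; apply: (card_lb _ _ [:: y; x; ord_pred y; ordS x]); first exact: uniqQ.
  by rewrite /= Pm ?Sm ?andbT //; move/andP: (R1_xy _ _ _ yx) => [-> ->].
rewrite negb_or in hc; case/andP: hc => c1 c2.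
apply: (card_lb _ _ [:: x; y; ord_pred x; ordS y]); first exact: uniqQ.
by rewrite /= Pm ?Sm ?andbT //; move/andP: (R1_xy _ _ _ xy) => [-> ->].
Qed.

Theorem corollary3p5 (R : realFieldType) (n : nat) (hn : (3 <= n)%N) :
  @is_dim1f R n (if (n <= 4)%N then n%:R / 2 else n%:R / 4).
Proof.
case: (leqP n 4) => hn4.
  split.
    have [H1 H2] := @upper R n (1/2) 2 ltac:(lra) ltac:(rewrite -mulr_natr; lra)
      (fun x y xy => card_lb _ (R1 x y) [:: x; y] ltac:(by rewrite /= inE xy) ltac:(by rewrite /= andbT R1_x ?R1_y)).
    by exists (fun _ => 1/2); split => //; rewrite H2 mulrC mul1r.
  move=> h [hb hr]; have hpos : forall v, 0 <= h v by move=> v; case/andP: (hb v).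
  have [n3|n4] : n = 3%N \/ n = 4%N by lia.
    have := @lower R n h hpos (@ordS n) [:: id; @ordS n].
    have -> : (size [:: @id 'I_n; @ordS n]) = 2%N by [].
    move=> H; have {}H := H (fun x => hr x _ (U2 _ x (ltnW hn))).
    have : n%:R <= 2%:R * fsum h [set: 'I_n].
      apply: H; first by move=> f [<-|[<-|[]]]; [exact: inj_id | exact: ordS_inj].
      by move=> x z hz; exact: (R1_lb3 _ _ _ n3 hz).
    move=> H3; lra.
  have := @lower R n h hpos (fun x => ordS (ordS x)) [:: id; fun x => ordS (ordS x)].
  have -> : (size [:: @id 'I_n; fun x => ordS (ordS x)]) = 2%N by [].
  move=> H; have {}H := H (fun x => hr x _ (U4 _ x n4)).
  have : n%:R <= 2%:R * fsum h [set: 'I_n].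
    apply: H; first by move=> f [<-|[<-|[]]]; [exact: inj_id | by move=> a b /ordS_inj /ordS_inj].
    by move=> x z hz; exact: (R1_lb4 _ _ _ n4 hz).
  move=> H3; lra.
have h5 : (5 <= n)%N by [].
split.
  have [H1 H2] := @upper R n (1/4) 4 ltac:(lra) ltac:(rewrite -mulr_natr; lra)
      (fun x y xy => card4 _ _ _ h5 xy).
  by exists (fun _ => 1/4); split => //; rewrite H2 mulrC mul1r.
move=> h [hb hr]; have hpos : forall v, 0 <= h v by move=> v; case/andP: (hb v).
have := @lower R n h hpos (@ordS n) [:: @ord_pred n; id; @ordS n; fun x => ordS (ordS x)].
have -> : (size [:: @ord_pred n; id; @ordS n; fun x => ordS (ordS x)]) = 4%N by [].
move=> H; have {}H := H (fun x => hr x _ (U2 _ x (ltnW hn))).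
have : n%:R <= 4%:R * fsum h [set: 'I_n].
  apply: H; first by move=> f [<-|[<-|[<-|[<-|[]]]]]; 
    [exact: ord_pred_inj | exact: inj_id | exact: ordS_inj | by move=> a b /ordS_inj /ordS_inj].
  by move=> x z hz; exact: (R1_lb5 _ _ _ h5 hz).
move=> H3; lra.
Qed.
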